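(* Let $A$, $B$ be formulas and $\Delta$ a context. If for every irreducible context $\Gamma$, the existence of a focused derivation of $\Gamma\vdash A$ implies the existence of a focused derivation of $\Gamma,\Delta\vdash B$, then $A,\Delta\vdash B$ has a focused derivation. In particular, $A\vdash A$ has a focused derivation for every formula $A$.
   Context: Formulas are built from atoms ($p,q,\dots$) by a binary product: every formula is an atom or $A\bullet B$. A context is a finite (possibly empty) list of formulas; commas denote concatenation. A context is irreducible if its leftmost formula is not a product (it is empty or begins with an atom). A focused derivation of a sequent is a finite derivation tree with no undischarged premises using only the rules: ($\bullet L$): from $A,B,\Delta\vdash C$ infer $A\bullet B,\Delta\vdash C$; ($\bullet R^{foc}$): from $\Gamma\vdash A$ and $\Delta\vdash B$ infer $\Gamma,\Delta\vdash A\bullet B$, where $\Gamma$ is irreducible; and ($id^{atm}$): $p\vdash p$ for atoms $p$. *)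

(* Defs.v *)
From Stdlib Require Import List.
Import ListNotations.

Inductive formula : Type :=
| atom : nat -> formula
| prod : formula -> formula -> formula.

(* A context is a finite list of formulas; commas = list concatenation. *)
Definition context := list formula.

Definition irreducible (G : context) : Prop :=
  match G with
  | [] => True
  | atom _ :: _ => True
  | prod _ _ :: _ => False
  end.

Inductive foc : context -> formula -> Prop :=
| foc_prodL : forall A B D C,
    foc (A :: B :: D) C -> foc (prod A B :: D) C
| foc_prodR : forall G D A B,
    irreducible G -> foc G A -> foc D B -> foc (G ++ D) (prod A B)
| foc_id : forall p, foc [atom p] (atom p).

(* Main.v *)
Require Import Defs.
From Stdlib Require Import List.
Import ListNotations.

Lemma irr_app : forall L G, irreducible L -> L <> [] -> irreducible (L ++ G).
Proof. intros [|x L] G H1 H2; [congruence|]. destruct x; simpl in *; tauto. Qed.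

Lemma foc_nil : forall G C, foc G C -> G <> [].
Proof.
  intros G C F. induction F; try congruence.
  destruct G; [simpl; exact IHF2|]. simpl; congruence.
Qed.

Lemma Q : forall A L D B, irreducible L ->
  (forall G, irreducible (L ++ G) -> foc G A -> foc (L ++ G ++ D) B) ->
  foc (L ++ A :: D) B.
Proof.
  induction A as [p|A1 IH1 A2 IH2]; intros L D B HL H.
  - apply (H [atom p]); [|constructor].
    destruct L as [|x L]; [exact I|]. destruct x; simpl in *; tauto.
  - assert (H0 : forall D0 B0, (forall G, irreducible G -> foc G (prod A1 A2) -> foc (G ++ D0) B0)
                 -> foc (prod A1 A2 :: D0) B0).
    { clear L D B HL H. intros D B H. constructor.
      apply (IH1 [] (A2 :: D) B I). intros G1 HG1 F1. simpl in HG1.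
      destruct G1 as [|x G1']. { exfalso; exact (foc_nil _ _ F1 eq_refl). }
      apply (IH2 (x :: G1') D B HG1). intros G2 HG2 F2.
      rewrite app_assoc. apply H.
      + exact HG2.
      + constructor; assumption. }
    destruct L as [|x L].
    + apply H0. intros G HG F. apply (H G HG F).
    + apply (H [prod A1 A2]).
      * apply irr_app; [exact HL|congruence].
      * apply (H0 [] (prod A1 A2)). intros G _ F. rewrite app_nil_r. exact F.
Qed.

Theorem lemma1p13 :
  (forall (A B : formula) (D : context),
     (forall G : context, irreducible G -> foc G A -> foc (G ++ D) B) ->
     foc (A :: D) B)
  /\ (forall A : formula, foc [A] A).
Proof.
  assert (P1 : forall (A B : formula) (D : context),
     (forall G : context, irreducible G -> foc G A -> foc (G ++ D) B) ->
     foc (A :: D) B).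
  { intros A B D H. apply (Q A [] D B I). exact H. }
  split; [exact P1|].
  intros A. apply P1. intros G _ F. rewrite app_nil_r. exact F.
Qed.
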